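(* Let $\mathcal{M}=(\mathbf A,\perp,\{\mathsf{t},\mathsf{f}\})$ be an $\mathfrak{N}_w$-model and let $x,y$ be distinct propositional variables. Then $h((x\Rightarrow y)\Rightarrow(y\Rightarrow x))\perp\mathsf{f}$ for every homomorphism $h$ from the formula algebra into $\mathbf A$ if and only if $\mathbf A$ is trivial (has exactly one element).
   Context: Formulas are built from variables using binary $\otimes,\circ$ and unary ${}^{*}$; in formulas and algebras, $\varphi\Rightarrow\psi:=(\varphi\circ\psi^{*})^{*}$, $\varphi\Leftrightarrow\psi:=(\varphi\Rightarrow\psi)\otimes(\psi\Rightarrow\varphi)$, $\varphi\not\Leftrightarrow\psi:=(\varphi\Leftrightarrow\psi)^{*}$, $\varphi\not\Leftrightarrow\psi\not\Leftrightarrow\chi:=((\varphi\not\Leftrightarrow\psi)\otimes(\varphi\not\Leftrightarrow\chi))\otimes(\psi\not\Leftrightarrow\chi)$. A weak $\mathcal{N}$-algebra is an algebra $(A,\otimes,\circ,{}^{*})$ of type $(2,2,1)$ with $\otimes,\circ$ commutative, $x^{**}=x$, and $(x\otimes y)\circ z=(x\otimes z)\circ y$. With $\mathsf{t}\ne\mathsf{f}$ symbols not in $A$, $\overline A=A\cup\{\mathsf{t},\mathsf{f}\}$, an $\mathfrak{N}_w$-model is $(\mathbf A,\perp,\{\mathsf{t},\mathsf{f}\})$, $\mathbf A$ a weak $\mathcal{N}$-algebra, $\perp\subseteq\overline A\times\overline A$, such that for all $x,y,z\in A$: (a) $x\perp x^{*}$; (b) $x\perp y^{*}$ and $y\perp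 x^{*}$ imply $x=y$; (c) $x\perp y$ iff $x\circ y\perp\mathsf{t}$; (d) $x\perp\mathsf{t}$ iff $x^{*}\perp\mathsf{f}$; (e) $x\perp\mathsf{f}$ and $y\perp\mathsf{f}$ iff $x\otimes y\perp\mathsf{f}$; (f) $(x\circ y^{*})^{*}\perp(x\circ y)^{*}$; (g) $x\perp y$ and $x\perp\mathsf{f}$ imply $y\perp\mathsf{t}$; (h) $(x\not\Leftrightarrow y\not\Leftrightarrow z)\perp((x\Rightarrow y)\Rightarrow((y\Rightarrow z)\Rightarrow(x\Rightarrow z)))^{*}$. *)

(* Defs.v *)
Set Implicit Arguments.

Inductive form : Type :=
| Var : nat -> form
| FTen : form -> form -> form
| FCirc : form -> form -> form
| FStar : form -> form.

Definition FImp (p q : form) : form := FStar (FCirc p (FStar q)).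

Section Alg.
Variables (A : Type) (tens circ : A -> A -> A) (star : A -> A).

Definition aimp (x y : A) : A := star (circ x (star y)).
Definition aiff (x y : A) : A := tens (aimp x y) (aimp y x).
Definition anIff (x y : A) : A := star (aiff x y).
Definition anIff3 (x y z : A) : A :=
  tens (tens (anIff x y) (anIff x z)) (anIff y z).

Definition weak_N_algebra : Prop :=
  (forall x y, tens x y = tens y x) /\
  (forall x y, circ x y = circ y x) /\
  (forall x, star (star x) = x) /\
  (forall x y z, circ (tens x y) z = circ (tens x z) y).

Inductive ext : Type :=
| Elt : A -> ext
| Tt : ext
| Ff : ext.

Variable perp : ext -> ext -> Prop.

(* N_w-model conditions (a)-(h) *)
Definition Nw_model : Prop :=
  weak_N_algebra /\
  (forall x, perp (Elt x) (Elt (star x))) /\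
  (forall x y, perp (Elt x) (Elt (star y)) -> perp (Elt y) (Elt (star x)) -> x = y) /\
  (forall x y, perp (Elt x) (Elt y) <-> perp (Elt (circ x y)) Tt) /\
  (forall x, perp (Elt x) Tt <-> perp (Elt (star x)) Ff) /\
  (forall x y, (perp (Elt x) Ff /\ perp (Elt y) Ff) <-> perp (Elt (tens x y)) Ff) /\
  (forall x y, perp (Elt (star (circ x (star y)))) (Elt (star (circ x y)))) /\
  (forall x y, perp (Elt x) (Elt y) -> perp (Elt x) Ff -> perp (Elt y) Tt) /\
  (forall x y z, perp (Elt (anIff3 x y z))
     (Elt (star (aimp (aimp x y) (aimp (aimp y z) (aimp x z)))))).

Definition is_hom (h : form -> A) : Prop :=
  (forall p q, h (FTen p q) = tens (h p) (h q)) /\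
  (forall p q, h (FCirc p q) = circ (h p) (h q)) /\
  (forall p, h (FStar p) = star (h p)).

Definition trivial_alg : Prop := exists a : A, forall b : A, b = a.

End Alg.

(* Main.v *)
Require Import Defs.
From Stdlib Require Import Arith.
Unset Implicit Arguments.

Fixpoint evalh (A : Type) (tens circ : A -> A -> A) (star : A -> A)
  (x y : nat) (a b : A) (f : form) : A :=
  match f with
  | Var n => if Nat.eqb n x then a else if Nat.eqb n y then b else a
  | FTen p q => tens (evalh A tens circ star x y a b p) (evalh A tens circ star x y a b q)
  | FCirc p q => circ (evalh A tens circ star x y a b p) (evalh A tens circ star x y a b q)
  | FStar p => star (evalh A tens circ star x y a b p)
  end.

Theorem proposition4p13
  (A : Type) (tens circ : A -> A -> A) (star : A -> A)
  (perp : ext A -> ext A -> Prop)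
  (Hne : inhabited A)
  (HM : Nw_model tens circ star perp)
  (x y : nat) (Hxy : x <> y) :
  (forall h : form -> A, is_hom tens circ star h ->
     perp (Elt (h (FImp (FImp (Var x) (Var y)) (FImp (Var y) (Var x))))) (Ff A))
  <-> trivial_alg A.
Proof.
  destruct HM as [[Htc [Hcc [Hss Hw]]] [Ha [Hb [Hc [Hd [He [Hf [Hg Hh]]]]]]]].
  split.
  - intros H.
    assert (Himp : forall a b, perp (Elt (aimp circ star (aimp circ star a b) (aimp circ star b a))) (Ff A)).
    { intros a b.
      pose proof (H (evalh A tens circ star x y a b)) as H1.
      assert (Hy : Nat.eqb y x = false) by (apply Nat.eqb_neq; auto).
      simpl in H1. rewrite Nat.eqb_refl, Hy, Nat.eqb_refl in H1.
      apply H1. split; [|split]; reflexivity. }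
    assert (E1 : forall u v, circ u (star v) = circ v (star u)).
    { intros u v.
      assert (Hpq : aimp circ star u v = aimp circ star v u).
      { apply Hb.
        - apply Hc. apply Hd. pose proof (Himp u v) as P.
          unfold aimp at 1 in P. exact P.
        - apply Hc. apply Hd. pose proof (Himp v u) as P.
          unfold aimp at 1 in P. exact P. }
      unfold aimp in Hpq. rewrite <- (Hss (circ u (star v))), Hpq, Hss. reflexivity. }
    assert (L4 : forall u v, star (circ u (star v)) = circ u v).
    { intros u v. apply Hb.
      - apply Hf.
      - apply Hc. rewrite E1. apply Hc. apply Hf. }
    assert (Lsq : forall w, perp (Elt (circ w w)) (Ff A)).
    { intros w. rewrite <- L4. apply Hd. apply Hc. apply Ha. }
    assert (LX : forall u v, tens u (tens u v) = v).
    { intros u v. apply Hb.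
      - apply Hc. apply Hd. rewrite L4. rewrite Hw. apply Lsq.
      - apply Hc. rewrite E1. apply Hd. rewrite L4. rewrite Hw. apply Lsq. }
    destruct Hne as [a].
    assert (AllF : forall u, perp (Elt u) (Ff A)).
    { intros u. assert (P := Lsq a). rewrite <- (LX u (circ a a)) in P.
      apply He in P. destruct P as [P _]. exact P. }
    exists a. intros b. apply Hb.
    + apply Hc. apply Hd. apply AllF.
    + apply Hc. apply Hd. apply AllF.
  - intros [a Ht] h _.
    rewrite (Ht (h _)).
    assert (P := Hc a (star a)). destruct P as [P _]. specialize (P (Ha a)).
    apply Hd in P. rewrite (Ht (star _)) in P. exact P.
Qed.
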